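(* Assume $\rho>\rho_1$. Then there is a homeomorphism $h:\widetilde X\to[0,1]$ such that $h\circ\widetilde f\circ h^{-1}$ is an increasing homeomorphism of $[0,1]$ whose fixed points are $0$ and $1$ (corresponding to $(\omega_0,\omega_0,\dots)$ and $(1,1,\dots)$). In particular $\widetilde X_{T_\infty}=\{(\omega_0,\omega_0,\dots)\}$, where $T_\infty=(0,0,0,\dots)$.
   Context: Standing setup. Fix real numbers $\rho,\delta,\gamma,\alpha$ with $0<\rho<1$, $\delta>0$, $\gamma>-\delta/\rho$, $-\delta/\rho<\alpha<0$. Define $f:[0,1]\to[0,1]$ by $f(x)=f_0(x):=\frac{\alpha x-\alpha\rho}{\gamma x+\delta}$ for $x\in[0,\rho]$ and $f(x)=f_1(x):=\frac{x-\rho}{1-\rho}$ for $x\in(\rho,1]$. Put $\rho_1:=f_0(0)$; $\omega_0$ denotes the fixed point of $f$ in $[0,\rho)$. The inverse limit is $\widetilde X=\{(x_0,x_1,\dots)\in[0,1]^{\mathbb N}: f(x_{n+1})=x_n \ \forall n\}$ with the product topology; the shift is $\widetilde f(x_0,x_1,\dots)=(f(x_0),x_0,x_1,\dots)$. A point $\widetilde x=(x_0,x_1,\dots)$ is of type $T\in\{0,1\}^{\mathbb N}$ if $x_{n+1}\in[0,\rho]$ whenever $T(n)=0$ and $x_{n+1}\in(\rho,1]$ whenever $T(n)=1$; $\widetilde X_T$ is the set of points of type $T$. *)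

(* Defs.v *)
From Stdlib Require Import Reals Lra.
Open Scope R_scope.

Definition f0 (rho delta gamma alpha x : R) : R :=
  (alpha * x - alpha * rho) / (gamma * x + delta).
Definition f1 (rho x : R) : R := (x - rho) / (1 - rho).
Definition fmap (rho delta gamma alpha x : R) : R :=
  if Rle_dec x rho then f0 rho delta gamma alpha x else f1 rho x.

Definition rho1 (rho delta gamma alpha : R) : R := f0 rho delta gamma alpha 0.

Definition seqR := nat -> R.

Definition in_invlim (f : R -> R) (x : seqR) : Prop :=
  (forall n, 0 <= x n <= 1) /\ (forall n, f (x (S n)) = x n).

Definition shift (f : R -> R) (x : seqR) : seqR :=
  fun n => match n with O => f (x O) | S m => x m end.

(* Type T in {0,1}^N, encoded by false = 0, true = 1. *)
Definition of_type (rho : R) (T : nat -> bool) (x : seqR) : Prop :=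
  forall n, (T n = false -> 0 <= x (S n) <= rho) /\
            (T n = true -> rho < x (S n) <= 1).

Definition T_infty : nat -> bool := fun _ => false.

(* Continuity of h : X~ -> R, X~ carrying the subspace topology of the
   product topology on [0,1]^N (basic neighbourhoods = cylinders). *)
Definition cont_on_invlim (P : seqR -> Prop) (h : seqR -> R) : Prop :=
  forall x, P x -> forall eps, eps > 0 ->
    exists (N : nat) (d : R), d > 0 /\
      forall y, P y -> (forall n, (n <= N)%nat -> Rabs (y n - x n) < d) ->
        Rabs (h y - h x) < eps.

(* Continuity of k : [0,1] -> [0,1]^N (product topology on the target,
   basic neighbourhoods = cylinders). *)
Definition cont_interval_to_seq (k : R -> seqR) : Prop :=
  forall t, 0 <= t <= 1 -> forall (eps : R) (N : nat), eps > 0 ->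
    exists d, d > 0 /\
      forall s, 0 <= s <= 1 -> Rabs (s - t) < d ->
        forall n, (n <= N)%nat -> Rabs (k s n - k t n) < eps.

Definition cont_interval (g : R -> R) : Prop :=
  forall t, 0 <= t <= 1 -> forall eps, eps > 0 ->
    exists d, d > 0 /\
      forall s, 0 <= s <= 1 -> Rabs (s - t) < d -> Rabs (g s - g t) < eps.

(* Main.v *)
Require Import Defs.
From Stdlib Require Import Reals Lra Psatz ClassicalEpsilon FunctionalExtensionality Arith Lia.
Open Scope R_scope.

Fixpoint itr (f : R -> R) (n : nat) (x : R) : R :=
  match n with O => x | S k => f (itr f k x) end.

Lemma itr_S' f n x : itr f (S n) x = itr f n (f x).
Proof. induction n; simpl; auto. simpl in IHn. rewrite IHn. auto. Qed.

Lemma itr_add f a b x : itr f (a + b) x = itr f a (itr f b x).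
Proof. induction a; simpl; auto. rewrite IHa; auto. Qed.

Lemma invlim_itr f x k n : in_invlim f x -> itr f k (x (n + k)%nat) = x n.
Proof.
  intros [_ H]. revert n. induction k; intros n.
  - simpl. rewrite Nat.add_0_r. auto.
  - rewrite itr_S'. replace (n + S k)%nat with (S (n + k)) by lia. rewrite H. apply IHk.
Qed.

Lemma pow_le_one c k : 0 <= c <= 1 -> c ^ k <= 1.
Proof. intros H. induction k; simpl; nra. Qed.

Lemma pow_mono_dec c j k : 0 <= c <= 1 -> (j <= k)%nat -> c ^ k <= c ^ j.
Proof.
  intros H Hjk. replace k with (j + (k - j))%nat by lia. rewrite pow_add.
  pose proof (pow_le_one c (k-j) H). pose proof (pow_le c j (proj1 H)). nra.
Qed.

Lemma small_zero q C a : 0 <= q < 1 -> 0 <= C -> (forall J, Rabs a <= q ^ J * C) -> a = 0.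
Proof.
  intros Hq HC H. destruct (Req_dec a 0) as [|Ha]; auto. exfalso.
  assert (Hpa : 0 < Rabs a) by (apply Rabs_pos_lt; auto).
  destruct (pow_lt_1_zero q ltac:(rewrite Rabs_pos_eq; lra) (Rabs a / (C + 1))) as [N HN].
  { apply Rdiv_lt_0_compat; lra. }
  specialize (HN N (le_n N)). specialize (H N). rewrite Rabs_pos_eq in HN by (apply pow_le; lra).
  pose proof (pow_le q N (proj1 Hq)).
  assert (q ^ N * (C + 1) < Rabs a).
  { apply (Rmult_lt_compat_r (C+1)) in HN; [|lra]. unfold Rdiv in HN.
    rewrite Rmult_assoc, Rinv_l, Rmult_1_r in HN; lra. }
  nra.
Qed.

Lemma pow_small q y : 0 <= q < 1 -> 0 < y -> exists N, q ^ N < y.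
Proof.
  intros Hq Hy. destruct (pow_lt_1_zero q ltac:(rewrite Rabs_pos_eq; lra) y Hy) as [N HN].
  exists N. specialize (HN N (le_n N)). rewrite Rabs_pos_eq in HN by (apply pow_le; lra). auto.
Qed.

Lemma frac_bound z p q C : 0 < C -> C <= p -> C <= q -> Rabs (z / (p * q)) <= Rabs z / (C * C).
Proof.
  intros HC Hp Hq. unfold Rdiv. rewrite Rabs_mult, Rabs_inv, (Rabs_pos_eq (p*q)) by nra.
  apply Rmult_le_compat_l; [apply Rabs_pos|]. apply Rinv_le_contravar; nra.
Qed.

Definition HH r d g a w := 0 < r < 1 /\ 0 < d /\ g > -d/r /\ -d/r < a < 0 /\ 0 <= w < r /\
  fmap r d g a w = w /\ r > rho1 r d g a.

Lemma Dr_pos r d g a w : HH r d g a w -> g * r + d > 0.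
Proof. intros (Hr & Hd & Hg & _). assert (-d/r * r = -d) by (field; lra). nra. Qed.

Lemma D_pos r d g a w x : HH r d g a w -> 0 <= x <= r -> g * x + d >= Rmin d (g*r+d) /\ Rmin d (g*r+d) > 0.
Proof.
  intros H Hx. pose proof (Dr_pos _ _ _ _ _ H). destruct H as (Hr & Hd & _).
  split; [|apply Rmin_case; lra].
  destruct (Rle_dec 0 g).
  - pose proof (Rmin_l d (g*r+d)). nra.
  - pose proof (Rmin_r d (g*r+d)). nra.
Qed.

Lemma rho1_val r d g a : 0 < d -> rho1 r d g a = - a * r / d.
Proof. intros. unfold rho1, f0. field. lra. Qed.

Lemma rho1_bounds r d g a w : HH r d g a w -> 0 < rho1 r d g a < r.
Proof.
  intros H. pose proof H as (Hr & Hd & _ & Ha & _ & _ & H1). rewrite rho1_val in * by lra.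
  split; [|lra]. apply Rdiv_lt_0_compat; nra.
Qed.

Lemma f0_diff r d g a x y : g*x+d <> 0 -> g*y+d <> 0 ->
  f0 r d g a x - f0 r d g a y = a * (g*r+d) * (x - y) / ((g*x+d)*(g*y+d)).
Proof. intros. unfold f0. field. auto. Qed.

Lemma f0_r r d g a : g*r+d <> 0 -> f0 r d g a r = 0.
Proof. intros. unfold f0. field_simplify; auto. unfold Rdiv. ring_simplify. auto. Qed.

Lemma f0_range r d g a w x : HH r d g a w -> 0 <= x <= r ->
  0 <= f0 r d g a x <= rho1 r d g a /\ (x < r -> 0 < f0 r d g a x).
Proof.
  intros H Hx. destruct (D_pos _ _ _ _ _ x H Hx) as [HD Hm].
  pose proof (Dr_pos _ _ _ _ _ H). pose proof H as (Hr & Hd & _ & Ha & _).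
  assert (Hx0 : g*x+d > 0) by lra.
  assert (E : f0 r d g a x = (a * (x - r)) / (g*x+d)) by (unfold f0; f_equal; ring).
  split; [split|].
  - rewrite E. apply Rmult_le_pos; [nra|]. left. apply Rinv_0_lt_compat. lra.
  - unfold rho1. assert (f0 r d g a x - f0 r d g a 0 <= 0).
    { rewrite f0_diff by lra. unfold Rdiv.
      assert (0 < /((g*x+d)*(g*0+d))) by (apply Rinv_0_lt_compat; nra).
      assert (a*(g*r+d) <= 0) by nra.
      assert (a*(g*r+d)*(x-0) <= 0) by nra. nra. }
    lra.
  - intros Hlt. rewrite E. apply Rdiv_lt_0_compat; nra.
Qed.

Lemma fmap_le r d g a x : x <= r -> fmap r d g a x = f0 r d g a x.
Proof. intros. unfold fmap. destruct (Rle_dec x r); [auto|lra]. Qed.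
Lemma fmap_gt r d g a x : x > r -> fmap r d g a x = f1 r x.
Proof. intros. unfold fmap. destruct (Rle_dec x r); [lra|auto]. Qed.

Lemma w_facts r d g a w : HH r d g a w ->
  f0 r d g a w = w /\ 0 < w /\ w <= rho1 r d g a.
Proof.
  intros H. pose proof H as (Hr & Hd & _ & Ha & Hw & Hfix & _).
  rewrite fmap_le in Hfix by lra.
  destruct (f0_range _ _ _ _ _ w H ltac:(lra)) as [[A B] C].
  specialize (C ltac:(lra)). rewrite Hfix in *. auto.
Qed.

Lemma fmap_01 r d g a w x : HH r d g a w -> 0 <= x <= 1 -> 0 <= fmap r d g a x <= 1.
Proof.
  intros H Hx. pose proof (rho1_bounds _ _ _ _ _ H). pose proof H as (Hr & _).
  destruct (Rle_dec x r).
  - rewrite fmap_le by auto. destruct (f0_range _ _ _ _ _ x H ltac:(lra)) as [[A B] _]. lra.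
  - rewrite fmap_gt by lra. unfold f1. split.
    + left. apply Rdiv_lt_0_compat; lra.
    + apply (Rmult_le_reg_r (1 - r)); [lra|]. unfold Rdiv. rewrite Rmult_assoc, Rinv_l; lra.
Qed.

Lemma fmap_0r r d g a w x : HH r d g a w -> 0 <= x <= r -> 0 <= fmap r d g a x <= r.
Proof.
  intros H Hx. pose proof (rho1_bounds _ _ _ _ _ H).
  rewrite fmap_le by lra. destruct (f0_range _ _ _ _ _ x H Hx) as [[A B] _]. lra.
Qed.

Lemma itr_01 r d g a w n x : HH r d g a w -> 0 <= x <= 1 -> 0 <= itr (fmap r d g a) n x <= 1.
Proof. intros H Hx. induction n; simpl; auto. apply (fmap_01 _ _ _ _ w); auto. Qed.

Lemma itr_0r r d g a w n x : HH r d g a w -> 0 <= x <= r -> 0 <= itr (fmap r d g a) n x <= r.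
Proof. intros H Hx. induction n; simpl; auto. apply (fmap_0r _ _ _ _ w); auto. Qed.

Definition PP r d g a x := g*(a+d)*x + d*d - g*a*r.
Definition BB r d g a w := a*a*(g*r+d)*(g*r+d)/((g*w+d)*(g*w+d)).
Definition qq r d g a w := Rmax (BB r d g a w / PP r d g a 0) (BB r d g a w / PP r d g a r).

Lemma DP r d g a w x : HH r d g a w -> 0 <= x <= r ->
  (g*x+d)*(g*f0 r d g a x+d) = PP r d g a x.
Proof.
  intros H Hx. destruct (D_pos _ _ _ _ _ x H Hx) as [HD Hm].
  unfold f0, PP. field. lra.
Qed.

Lemma DP_pos r d g a w x : HH r d g a w -> 0 <= x <= r -> PP r d g a x > 0.
Proof.
  intros H Hx. rewrite <- (DP _ _ _ _ w) by auto.
  pose proof (rho1_bounds _ _ _ _ _ H).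
  destruct (f0_range _ _ _ _ _ x H Hx) as [Hf _].
  destruct (D_pos _ _ _ _ _ x H Hx) as [HD Hm].
  destruct (D_pos _ _ _ _ _ (f0 r d g a x) H ltac:(lra)) as [HD' _]. nra.
Qed.

Lemma f0f0 r d g a w x : HH r d g a w -> 0 <= x <= r ->
  f0 r d g a (f0 r d g a x) - w = BB r d g a w * (x - w) / PP r d g a x.
Proof.
  intros H Hx. destruct (w_facts _ _ _ _ _ H) as (Ew & Hw0 & Hw1).
  pose proof (rho1_bounds _ _ _ _ _ H). pose proof H as (Hr & _ & _ & _ & Hw & _).
  destruct (f0_range _ _ _ _ _ x H Hx) as [Hf _].
  destruct (D_pos _ _ _ _ _ x H Hx) as [HD Hm].
  destruct (D_pos _ _ _ _ _ (f0 r d g a x) H ltac:(lra)) as [HD' _].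
  destruct (D_pos _ _ _ _ _ w H ltac:(lra)) as [HDw HDm].
  rewrite <- (DP _ _ _ _ w) by auto.
  set (y := f0 r d g a x) in *.
  replace (f0 r d g a y - w) with (f0 r d g a y - f0 r d g a w) by (rewrite Ew; ring).
  rewrite f0_diff by lra.
  replace (y - w) with (f0 r d g a x - f0 r d g a w) by (rewrite Ew; auto).
  rewrite f0_diff by lra. unfold BB. field. repeat split; lra.
Qed.

Lemma qq_lt1 r d g a w : HH r d g a w -> 0 <= qq r d g a w < 1.
Proof.
  intros H. destruct (w_facts _ _ _ _ _ H) as (Ew & Hw0 & Hw1).
  pose proof (rho1_bounds _ _ _ _ _ H). pose proof H as (Hr & Hd & _ & Ha & Hw & _).
  pose proof (Dr_pos _ _ _ _ _ H).
  destruct (D_pos _ _ _ _ _ w H ltac:(lra)) as [HDw HDm].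
  pose proof (DP_pos _ _ _ _ _ 0 H ltac:(lra)) as P0.
  pose proof (DP_pos _ _ _ _ _ r H ltac:(lra)) as Pr.
  assert (HB : BB r d g a w >= 0).
  { unfold BB. apply Rle_ge. apply Rmult_le_pos.
    - replace (a*a*(g*r+d)*(g*r+d)) with ((a*(g*r+d))*(a*(g*r+d))) by ring. apply Rle_0_sqr.
    - left; apply Rinv_0_lt_compat. replace ((g*w+d)*(g*w+d)) with (Rsqr (g*w+d)) by reflexivity.
      apply Rlt_0_sqr. apply Rgt_not_eq; lra. }
  assert (U0 : 0 <= BB r d g a w / PP r d g a 0 < 1).
  { split. { apply Rmult_le_pos; [lra|]. left; apply Rinv_0_lt_compat; lra. }
    pose proof (f0f0 _ _ _ _ _ 0 H ltac:(lra)) as E.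
    assert (f0 r d g a (f0 r d g a 0) > 0).
    { assert (E1 : f0 r d g a 0 = rho1 r d g a) by reflexivity. rewrite E1.
      destruct (f0_range _ _ _ _ _ (rho1 r d g a) H ltac:(lra)) as [_ C]. apply C; lra. }
    set (u := BB r d g a w / PP r d g a 0) in *.
    assert (E2 : BB r d g a w * (0 - w) / PP r d g a 0 = - w * u) by (unfold u; field; lra).
    nra. }
  assert (Ur : 0 <= BB r d g a w / PP r d g a r < 1).
  { split. { apply Rmult_le_pos; [lra|]. left; apply Rinv_0_lt_compat; lra. }
    pose proof (f0f0 _ _ _ _ _ r H ltac:(lra)) as E.
    rewrite f0_r in E by lra.
    assert (E1 : f0 r d g a 0 = rho1 r d g a) by reflexivity. rewrite E1 in E.
    set (u := BB r d g a w / PP r d g a r) in *.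
    assert (E2 : BB r d g a w * (r - w) / PP r d g a r = (r - w) * u) by (unfold u; field; lra).
    nra. }
  unfold qq. apply Rmax_case; lra.
Qed.

Lemma contract2 r d g a w x : HH r d g a w -> 0 <= x <= r ->
  Rabs (fmap r d g a (fmap r d g a x) - w) <= qq r d g a w * Rabs (x - w).
Proof.
  intros H Hx. pose proof (rho1_bounds _ _ _ _ _ H).
  destruct (f0_range _ _ _ _ _ x H Hx) as [Hf _].
  rewrite (fmap_le _ _ _ _ x) by lra. rewrite fmap_le by lra.
  rewrite (f0f0 _ _ _ _ w) by auto.
  pose proof (DP_pos _ _ _ _ _ x H Hx) as Px.
  pose proof (DP_pos _ _ _ _ _ 0 H ltac:(lra)) as P0.
  pose proof (DP_pos _ _ _ _ _ r H ltac:(lra)) as Pr.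
  pose proof H as (Hr & Hd & _ & Ha & Hw & _).
  destruct (D_pos _ _ _ _ _ w H ltac:(lra)) as [HDw HDm].
  assert (HB : BB r d g a w >= 0).
  { unfold BB. apply Rle_ge. apply Rmult_le_pos.
    - replace (a*a*(g*r+d)*(g*r+d)) with ((a*(g*r+d))*(a*(g*r+d))) by ring. apply Rle_0_sqr.
    - left; apply Rinv_0_lt_compat. replace ((g*w+d)*(g*w+d)) with (Rsqr (g*w+d)) by reflexivity.
      apply Rlt_0_sqr. apply Rgt_not_eq; lra. }
  assert (Hle : BB r d g a w / PP r d g a x <= qq r d g a w).
  { unfold qq. destruct (Rle_dec 0 (g*(a+d))).
    - eapply Rle_trans; [|apply Rmax_l]. unfold Rdiv. apply Rmult_le_compat_l; [lra|].
      apply Rinv_le_contravar; auto. unfold PP. nra.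
    - eapply Rle_trans; [|apply Rmax_r]. unfold Rdiv. apply Rmult_le_compat_l; [lra|].
      apply Rinv_le_contravar; auto. unfold PP. nra. }
  replace (BB r d g a w * (x - w) / PP r d g a x) with ((BB r d g a w / PP r d g a x) * (x - w))
    by (field; lra).
  rewrite Rabs_mult. rewrite (Rabs_pos_eq (BB r d g a w / PP r d g a x)).
  - apply Rmult_le_compat_r; [apply Rabs_pos|auto].
  - apply Rmult_le_pos; [lra|]. left; apply Rinv_0_lt_compat; lra.
Qed.

Lemma contract_itr r d g a w J x : HH r d g a w -> 0 <= x <= r ->
  Rabs (itr (fmap r d g a) (2*J) x - w) <= qq r d g a w ^ J * Rabs (x - w).
Proof.
  intros H. pose proof (qq_lt1 _ _ _ _ _ H). revert x. induction J; intros x Hx.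
  - simpl. lra.
  - replace (2 * S J)%nat with (2 * J + 2)%nat by lia. rewrite itr_add. simpl itr at 2.
    pose proof (fmap_0r _ _ _ _ _ x H Hx). pose proof (fmap_0r _ _ _ _ _ _ H H1).
    eapply Rle_trans; [apply IHJ; auto|].
    pose proof (contract2 _ _ _ _ _ x H Hx). simpl.
    pose proof (pow_le (qq r d g a w) J (proj1 H0)). nra.
Qed.

Lemma near_w r d g a w x n J : HH r d g a w -> in_invlim (fmap r d g a) x ->
  x (n + 2*J)%nat <= r -> Rabs (x n - w) <= qq r d g a w ^ J * r.
Proof.
  intros H Hx Hle. rewrite <- (invlim_itr _ x (2*J) n Hx).
  pose proof H as (Hr & _ & _ & _ & Hw & _).
  destruct Hx as [Hb _]. specialize (Hb (n + 2*J)%nat).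
  eapply Rle_trans; [apply contract_itr; auto; lra|].
  pose proof (qq_lt1 _ _ _ _ _ H). pose proof (pow_le (qq r d g a w) J (proj1 H0)).
  apply Rmult_le_compat_l; auto. apply Rabs_le; lra.
Qed.

Lemma all_le_r r d g a w x : HH r d g a w -> in_invlim (fmap r d g a) x ->
  (forall n, x n <= r) -> forall n, x n = w.
Proof.
  intros H Hx Hle n. pose proof (qq_lt1 _ _ _ _ _ H). pose proof H as (Hr & _).
  assert (x n - w = 0).
  { apply (small_zero (qq r d g a w) r); auto; try lra. intros J. apply near_w; auto. }
  lra.
Qed.

Lemma stepA r d g a w x m : HH r d g a w -> in_invlim (fmap r d g a) x ->
  x m > rho1 r d g a -> x (S m) > r /\ 1 - x (S m) = (1 - r) * (1 - x m).
Proof.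
  intros H [Hb Hf] Hm. pose proof H as (Hr & _).
  destruct (Rle_dec (x (S m)) r).
  - exfalso. rewrite <- Hf in Hm. rewrite fmap_le in Hm by auto.
    assert (0 <= x (S m) <= r) by (specialize (Hb (S m)); lra).
    destruct (f0_range _ _ _ _ _ (x (S m)) H H0) as [[_ A] _]. lra.
  - split; [lra|]. rewrite <- (Hf m). rewrite fmap_gt by lra. unfold f1. field. lra.
Qed.

Lemma A_iter r d g a w x m j : HH r d g a w -> in_invlim (fmap r d g a) x ->
  x m > rho1 r d g a -> x (m + j)%nat > rho1 r d g a /\ 1 - x (m + j)%nat = (1 - r) ^ j * (1 - x m).
Proof.
  intros H Hx Hm. pose proof (rho1_bounds _ _ _ _ _ H). induction j.
  - rewrite Nat.add_0_r. simpl. split; [auto|ring].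
  - destruct IHj as [I1 I2]. replace (m + S j)%nat with (S (m + j)) by lia.
    destruct (stepA _ _ _ _ _ x _ H Hx I1). split; [lra|]. rewrite H2, I2. simpl. ring.
Qed.

Lemma A_gt r d g a w x m j : HH r d g a w -> in_invlim (fmap r d g a) x ->
  x m > rho1 r d g a -> x (m + S j)%nat > r.
Proof.
  intros H Hx Hm. destruct (A_iter _ _ _ _ _ x m j H Hx Hm) as [A1 _].
  replace (m + S j)%nat with (S (m + j)) by lia. apply (stepA _ _ _ _ _ x _ H Hx A1).
Qed.

Lemma Lindep r d g a w x m m' : HH r d g a w -> in_invlim (fmap r d g a) x ->
  x m > rho1 r d g a -> x m' > rho1 r d g a ->
  (1 - x m) / (1 - r) ^ m = (1 - x m') / (1 - r) ^ m'.
Proof.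
  intros H Hx Hm Hm'. pose proof H as (Hr & _).
  assert (forall k l, x k > rho1 r d g a -> (k <= l)%nat ->
    (1 - x k) / (1 - r) ^ k = (1 - x l) / (1 - r) ^ l).
  { intros k l Hk Hkl. replace l with (k + (l - k))%nat by lia.
    destruct (A_iter _ _ _ _ _ x k (l - k) H Hx Hk) as [_ E]. rewrite E, pow_add.
    field. split; apply pow_nonzero; lra. }
  destruct (le_lt_dec m m').
  - apply H0; auto.
  - symmetry. apply H0; auto. lia.
Qed.

Definition KK r d g a := Rabs a * (g*r+d) / (Rmin d (g*r+d) * Rmin d (g*r+d)) + 1 / (1 - r).

Lemma f0_lip r d g a w x y : HH r d g a w -> 0 <= x <= r -> 0 <= y <= r ->
  Rabs (f0 r d g a x - f0 r d g a y) <= Rabs a * (g*r+d) / (Rmin d (g*r+d) * Rmin d (g*r+d)) * Rabs (x - y).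
Proof.
  intros H Hx Hy. destruct (D_pos _ _ _ _ _ x H Hx) as [Dx Hm].
  destruct (D_pos _ _ _ _ _ y H Hy) as [Dy _]. pose proof (Dr_pos _ _ _ _ _ H).
  rewrite f0_diff by lra. eapply Rle_trans; [apply (frac_bound _ _ _ (Rmin d (g*r+d))); lra|].
  rewrite !Rabs_mult, (Rabs_pos_eq (g*r+d)) by lra. right. field. lra.
Qed.

Lemma fmap_lip_ord r d g a w x y : HH r d g a w -> 0 <= x <= 1 -> 0 <= y <= 1 -> x <= y ->
  Rabs (fmap r d g a x - fmap r d g a y) <= KK r d g a * Rabs (x - y).
Proof.
  intros H Hx Hy Hxy. pose proof H as (Hr & _). pose proof (Dr_pos _ _ _ _ _ H).
  set (K0 := Rabs a * (g*r+d) / (Rmin d (g*r+d) * Rmin d (g*r+d))).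
  assert (HK0 : 0 <= K0).
  { unfold K0. destruct (D_pos _ _ _ _ _ 0 H ltac:(lra)) as [_ Hm].
    apply Rmult_le_pos; [apply Rmult_le_pos; [apply Rabs_pos|lra]|]. left. apply Rinv_0_lt_compat. nra. }
  assert (Hc : 0 < 1 / (1 - r)) by (apply Rdiv_lt_0_compat; lra).
  unfold KK. fold K0.
  destruct (Rle_dec y r).
  - rewrite !fmap_le by lra. eapply Rle_trans; [apply (f0_lip _ _ _ _ w); auto; lra|].
    apply Rmult_le_compat_r; [apply Rabs_pos|fold K0; lra].
  - destruct (Rle_dec x r).
    + rewrite fmap_le, (fmap_gt _ _ _ _ y) by lra.
      replace (f0 r d g a x - f1 r y) with ((f0 r d g a x - f0 r d g a r) - (f1 r y - f1 r r))
        by (rewrite f0_r by lra; unfold f1; field; lra).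
      pose proof (f0_lip _ _ _ _ w x r H ltac:(lra) ltac:(lra)). fold K0 in H1.
      assert (E : f1 r y - f1 r r = (y - r) * (1 / (1 - r))) by (unfold f1; field; lra).
      rewrite E. rewrite (Rabs_left1 (x - y)) by lra. rewrite (Rabs_left1 (x - r)) in H1 by lra.
      set (A := f0 r d g a x - f0 r d g a r) in *.
      assert (T : Rabs (A - (y - r) * (1 / (1 - r))) <= Rabs A + Rabs ((y - r) * (1 / (1 - r)))).
      { unfold Rminus at 1. rewrite <- (Rabs_Ropp ((y - r) * (1 / (1 - r)))). apply Rabs_triang. }
      rewrite (Rabs_pos_eq ((y - r) * (1 / (1 - r)))) in T by (apply Rmult_le_pos; lra).
      assert (K0 * (y - r) >= 0) by nra. assert ((1/(1-r)) * (r - x) >= 0) by nra. nra.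
    + rewrite !fmap_gt by lra. unfold f1.
      replace ((x - r) / (1 - r) - (y - r) / (1 - r)) with ((x - y) * (1/(1-r))) by (field; lra).
      rewrite Rabs_mult, (Rabs_pos_eq (1/(1-r))) by lra.
      rewrite Rmult_comm; apply Rmult_le_compat_r; [apply Rabs_pos|lra].
Qed.

Lemma fmap_lip r d g a w x y : HH r d g a w -> 0 <= x <= 1 -> 0 <= y <= 1 ->
  Rabs (fmap r d g a x - fmap r d g a y) <= KK r d g a * Rabs (x - y).
Proof.
  intros H Hx Hy. destruct (Rle_dec x y).
  - apply (fmap_lip_ord _ _ _ _ w); auto.
  - rewrite Rabs_minus_sym, (Rabs_minus_sym x). apply (fmap_lip_ord _ _ _ _ w); auto; lra.
Qed.

Lemma KK_pos r d g a w : HH r d g a w -> 0 < KK r d g a.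
Proof.
  intros H. pose proof H as (Hr & _). pose proof (Dr_pos _ _ _ _ _ H). unfold KK.
  destruct (D_pos _ _ _ _ _ 0 H ltac:(lra)) as [_ Hm].
  assert (0 <= Rabs a * (g*r+d) / (Rmin d (g*r+d) * Rmin d (g*r+d))).
  { apply Rmult_le_pos; [apply Rmult_le_pos; [apply Rabs_pos|lra]|]. left. apply Rinv_0_lt_compat. nra. }
  assert (0 < 1/(1-r)) by (apply Rdiv_lt_0_compat; lra). lra.
Qed.

Lemma itr_lip r d g a w n x y : HH r d g a w -> 0 <= x <= 1 -> 0 <= y <= 1 ->
  Rabs (itr (fmap r d g a) n x - itr (fmap r d g a) n y) <= KK r d g a ^ n * Rabs (x - y).
Proof.
  intros H Hx Hy. induction n.
  - simpl. lra.
  - simpl. eapply Rle_trans; [apply (fmap_lip _ _ _ _ w); auto; apply (itr_01 _ _ _ _ w); auto|].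
    pose proof (KK_pos _ _ _ _ _ H). rewrite Rmult_assoc. apply Rmult_le_compat_l; lra.
Qed.

Definition hfun (r r1 : R) (x : seqR) : R :=
  match excluded_middle_informative (exists m, x m > r1) with
  | left Hx => let m := proj1_sig (constructive_indefinite_description _ Hx) in
      1 / (1 + (1 - x m) / (1 - r) ^ m)
  | right _ => 0 end.

Definition Lof t := (1 - t) / t.

Definition hinvf (r r1 w : R) (f : R -> R) (t : R) : seqR :=
  match excluded_middle_informative (0 < t /\ exists M, 1 - Lof t * (1 - r) ^ M > r1) with
  | left Ht => let M := proj1_sig (constructive_indefinite_description _ (proj2 Ht)) in
      fun n => itr f M (1 - Lof t * (1 - r) ^ (n + M))
  | right _ => fun _ => w end.

Definition H_ r d g a := hfun r (rho1 r d g a).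
Definition Hi r d g a w := hinvf r (rho1 r d g a) w (fmap r d g a).

Lemma hfun_val r d g a w x m : HH r d g a w -> in_invlim (fmap r d g a) x ->
  x m > rho1 r d g a -> H_ r d g a x = 1 / (1 + (1 - x m) / (1 - r) ^ m).
Proof.
  intros H Hx Hm. unfold H_, hfun. destruct excluded_middle_informative as [E|E].
  - destruct constructive_indefinite_description as [m0 Hm0]. simpl.
    rewrite (Lindep r d g a w x m0 m); auto.
  - exfalso. apply E. eauto.
Qed.

Lemma hfun_zero r d g a x : (forall m, x m <= rho1 r d g a) -> H_ r d g a x = 0.
Proof.
  intros Hm. unfold H_, hfun. destruct excluded_middle_informative as [E|E]; auto.
  exfalso. destruct E as [m Em]. specialize (Hm m). lra.
Qed.

Lemma stepG r d g a w L j : HH r d g a w -> 0 <= L -> 1 - L * (1 - r) ^ j > 0 ->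
  fmap r d g a (1 - L * (1 - r) ^ (S j)) = 1 - L * (1 - r) ^ j.
Proof.
  intros H HL Hj. pose proof H as (Hr & _). simpl.
  rewrite fmap_gt by nra. unfold f1. field. lra.
Qed.

Lemma Gl r d g a w L j i : HH r d g a w -> 0 <= L -> 1 - L * (1 - r) ^ j > 0 ->
  itr (fmap r d g a) i (1 - L * (1 - r) ^ (j + i)) = 1 - L * (1 - r) ^ j.
Proof.
  intros H HL Hj. pose proof H as (Hr & _). induction i.
  - rewrite Nat.add_0_r. auto.
  - rewrite itr_S'. replace (j + S i)%nat with (S (j + i)) by lia.
    rewrite (stepG _ _ _ _ w); auto.
    pose proof (pow_mono_dec (1 - r) j (j+i) ltac:(lra) ltac:(lia)).
    pose proof (pow_le (1-r) (j+i) ltac:(lra)). nra.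
Qed.

Lemma indepM r d g a w L M M' n : HH r d g a w -> 0 <= L ->
  1 - L * (1 - r) ^ M > rho1 r d g a -> 1 - L * (1 - r) ^ M' > rho1 r d g a ->
  itr (fmap r d g a) M (1 - L * (1 - r) ^ (n + M)) = itr (fmap r d g a) M' (1 - L * (1 - r) ^ (n + M')).
Proof.
  intros H HL HM HM'. pose proof H as (Hr & _). pose proof (rho1_bounds _ _ _ _ _ H).
  assert (forall k l, 1 - L * (1 - r) ^ k > rho1 r d g a -> (k <= l)%nat ->
    itr (fmap r d g a) k (1 - L * (1 - r) ^ (n + k)) = itr (fmap r d g a) l (1 - L * (1 - r) ^ (n + l))).
  { intros k l Hk Hkl. replace l with (k + (l - k))%nat by lia. rewrite itr_add.
    replace (n + (k + (l - k)))%nat with ((n + k) + (l - k))%nat by lia.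
    rewrite (Gl r d g a w L (n+k) (l-k)); auto.
    pose proof (pow_mono_dec (1 - r) k (n+k) ltac:(lra) ltac:(lia)).
    pose proof (pow_le (1-r) (n+k) ltac:(lra)). nra. }
  destruct (le_lt_dec M M').
  - apply H1; auto.
  - symmetry. apply H1; auto. lia.
Qed.

Lemma Lof_nonneg t : 0 < t <= 1 -> 0 <= Lof t.
Proof. intros. unfold Lof. apply Rmult_le_pos; [lra|]. left. apply Rinv_0_lt_compat. lra. Qed.

Lemma exM r d g a w t : HH r d g a w -> 0 < t <= 1 -> exists M, 1 - Lof t * (1 - r) ^ M > rho1 r d g a.
Proof.
  intros H Ht. pose proof H as (Hr & _). pose proof (rho1_bounds _ _ _ _ _ H).
  pose proof (Lof_nonneg t Ht).
  destruct (pow_small (1 - r) ((1 - rho1 r d g a) / (Lof t + 1)) ltac:(lra)) as [M HM].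
  { apply Rdiv_lt_0_compat; lra. }
  exists M. pose proof (pow_le (1-r) M ltac:(lra)).
  assert ((1 - r) ^ M * (Lof t + 1) < 1 - rho1 r d g a).
  { apply (Rmult_lt_compat_r (Lof t + 1)) in HM; [|lra]. unfold Rdiv in HM.
    rewrite Rmult_assoc, Rinv_l, Rmult_1_r in HM; lra. }
  nra.
Qed.

Lemma hinv_val r d g a w t M n : HH r d g a w -> 0 < t <= 1 ->
  1 - Lof t * (1 - r) ^ M > rho1 r d g a ->
  Hi r d g a w t n = itr (fmap r d g a) M (1 - Lof t * (1 - r) ^ (n + M)).
Proof.
  intros H Ht HM. unfold Hi, hinvf. destruct excluded_middle_informative as [E|E].
  - destruct constructive_indefinite_description as [M0 HM0]. simpl.
    apply (indepM _ _ _ _ w); auto. apply Lof_nonneg; auto.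
  - exfalso. apply E. split; [lra|eauto].
Qed.

Lemma hinv_zero r d g a w : Hi r d g a w 0 = fun _ => w.
Proof.
  unfold Hi, hinvf. destruct excluded_middle_informative as [E|E]; auto. exfalso. lra.
Qed.

Lemma hinv_coord r d g a w t M n : HH r d g a w -> 0 < t <= 1 ->
  1 - Lof t * (1 - r) ^ M > rho1 r d g a -> 1 - Lof t * (1 - r) ^ n > 0 ->
  Hi r d g a w t n = 1 - Lof t * (1 - r) ^ n.
Proof.
  intros H Ht HM Hn. rewrite (hinv_val _ _ _ _ _ _ M) by auto.
  apply (Gl _ _ _ _ w); auto. apply Lof_nonneg; auto.
Qed.

Lemma hinv_props r d g a w t : HH r d g a w -> 0 < t <= 1 ->
  in_invlim (fmap r d g a) (Hi r d g a w t) /\ H_ r d g a (Hi r d g a w t) = t.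
Proof.
  intros H Ht. pose proof H as (Hr & _). pose proof (rho1_bounds _ _ _ _ _ H).
  pose proof (Lof_nonneg t Ht) as HL.
  destruct (exM _ _ _ _ w t H Ht) as [M HM].
  assert (Hs : forall n, rho1 r d g a < 1 - Lof t * (1 - r) ^ (n + M) <= 1).
  { intros n. pose proof (pow_mono_dec (1 - r) M (n+M) ltac:(lra) ltac:(lia)).
    pose proof (pow_le (1-r) (n+M) ltac:(lra)). split; nra. }
  assert (Hinv : in_invlim (fmap r d g a) (Hi r d g a w t)).
  { split.
    - intros n. rewrite (hinv_val _ _ _ _ _ _ M) by auto. apply (itr_01 _ _ _ _ w); auto.
      specialize (Hs n). lra.
    - intros n. rewrite !(hinv_val _ _ _ _ _ _ M) by auto.
      change (fmap r d g a (itr (fmap r d g a) M (1 - Lof t * (1 - r) ^ (S n + M))))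
        with (itr (fmap r d g a) (S M) (1 - Lof t * (1 - r) ^ (S n + M))).
      rewrite itr_S'. f_equal. replace (S n + M)%nat with (S (n + M)) by lia.
      apply (stepG _ _ _ _ w); auto. specialize (Hs n). lra. }
  split; auto.
  rewrite (hfun_val _ _ _ _ w _ M); auto.
  - rewrite (hinv_coord _ _ _ _ _ _ M) by (auto; lra). unfold Lof. field.
    repeat split; try apply pow_nonzero; lra.
  - rewrite (hinv_coord _ _ _ _ _ _ M) by (auto; lra). auto.
Qed.

Lemma noex_w r d g a w x : HH r d g a w -> in_invlim (fmap r d g a) x ->
  ~ (exists m, x m > rho1 r d g a) -> forall n, x n = w.
Proof.
  intros H Hx E. pose proof (rho1_bounds _ _ _ _ _ H). apply (all_le_r r d g a w x H Hx).
  intros n. destruct (Rle_dec (x n) (rho1 r d g a)); [lra|]. exfalso. apply E. exists n. lra.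
Qed.

Lemma w_invlim r d g a w : HH r d g a w -> in_invlim (fmap r d g a) (fun _ => w).
Proof.
  intros H. pose proof H as (Hr & _ & _ & _ & Hw & Hf & _). split; intros; auto. lra.
Qed.

Lemma Lof_t L : 0 <= L -> Lof (1 / (1 + L)) = L.
Proof. intros. unfold Lof. field. lra. Qed.

Lemma inv1L L : 0 <= L -> 0 < 1 / (1 + L) <= 1.
Proof.
  intros. split; [apply Rdiv_lt_0_compat; lra|].
  apply (Rmult_le_reg_r (1+L)); [lra|]. unfold Rdiv. rewrite Rmult_assoc, Rinv_l; lra.
Qed.

Lemma h_range r d g a w x : HH r d g a w -> in_invlim (fmap r d g a) x -> 0 <= H_ r d g a x <= 1.
Proof.
  intros H Hx. pose proof H as (Hr & _).
  destruct (classic (exists m, x m > rho1 r d g a)) as [[m Hm]|E].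
  - rewrite (hfun_val _ _ _ _ w x m) by auto.
    assert (0 <= (1 - x m) / (1 - r) ^ m).
    { destruct Hx as [Hb _]. specialize (Hb m). apply Rmult_le_pos; [lra|].
      left. apply Rinv_0_lt_compat. apply pow_lt. lra. }
    pose proof (inv1L _ H0). lra.
  - rewrite hfun_zero; [lra|]. intros m. destruct (Rle_dec (x m) (rho1 r d g a)); auto.
    exfalso. apply E. exists m. lra.
Qed.

Lemma hinv_h r d g a w x : HH r d g a w -> in_invlim (fmap r d g a) x -> Hi r d g a w (H_ r d g a x) = x.
Proof.
  intros H Hx. pose proof H as (Hr & _). pose proof (rho1_bounds _ _ _ _ _ H).
  destruct (classic (exists m, x m > rho1 r d g a)) as [[m Hm]|E].
  - rewrite (hfun_val _ _ _ _ w x m) by auto.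
    set (L := (1 - x m) / (1 - r) ^ m).
    assert (HL : 0 <= L).
    { unfold L. destruct Hx as [Hb _]. specialize (Hb m). apply Rmult_le_pos; [lra|].
      left. apply Rinv_0_lt_compat. apply pow_lt. lra. }
    assert (Ht : 0 < 1 / (1 + L) <= 1).
    { apply inv1L; auto. }
    assert (EL : 1 - Lof (1 / (1 + L)) * (1 - r) ^ m = x m).
    { rewrite Lof_t by auto. unfold L. field. apply pow_nonzero. lra. }
    apply functional_extensionality. intros n.
    rewrite (hinv_val _ _ _ _ _ _ m) by (auto; lra).
    rewrite Lof_t by auto.
    destruct (A_iter _ _ _ _ _ x m n H Hx Hm) as [_ E1].
    replace (1 - L * (1 - r) ^ (n + m)) with (x (n + m)%nat).
    + apply invlim_itr; auto.
    + replace (n + m)%nat with (m + n)%nat by lia. rewrite pow_add.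
      unfold L. field_simplify; [|apply pow_nonzero; lra]. 
      lra.
  - rewrite hfun_zero.
    + rewrite hinv_zero. apply functional_extensionality. intros n.
      symmetry. apply (noex_w r d g a w x); auto.
    + intros m. destruct (Rle_dec (x m) (rho1 r d g a)); auto.
      exfalso. apply E. exists m. lra.
Qed.

Lemma shift_invlim r d g a w x : HH r d g a w -> in_invlim (fmap r d g a) x ->
  in_invlim (fmap r d g a) (shift (fmap r d g a) x).
Proof.
  intros H [Hb Hf]. split.
  - intros [|n]; simpl; auto. apply (fmap_01 _ _ _ _ w); auto.
  - intros [|n]; simpl; auto.
Qed.

Lemma gform r d g a w t : HH r d g a w -> 0 <= t <= 1 ->
  H_ r d g a (shift (fmap r d g a) (Hi r d g a w t)) = (1 - r) * t / (1 - r * t).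
Proof.
  intros H Ht. pose proof H as (Hr & _). pose proof (rho1_bounds _ _ _ _ _ H).
  destruct (w_facts _ _ _ _ _ H) as (Ew & Hw0 & Hw1).
  destruct (Req_dec t 0) as [->|Ht0].
  - rewrite hinv_zero. rewrite hfun_zero.
    + field; lra.
    + intros [|m]; simpl; auto. rewrite fmap_le by lra. rewrite Ew. auto.
  - assert (Ht' : 0 < t <= 1) by lra.
    destruct (exM _ _ _ _ w t H Ht') as [M HM].
    destruct (hinv_props _ _ _ _ w t H Ht') as [Hinv _].
    assert (XM : Hi r d g a w t M = 1 - Lof t * (1 - r) ^ M).
    { apply (hinv_coord _ _ _ _ _ _ M); auto. lra. }
    rewrite (hfun_val _ _ _ _ w _ (S M)).
    + pose proof (pow_lt (1-r) M ltac:(lra)). simpl shift. rewrite XM. unfold Lof. simpl. field.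
      repeat split; try apply pow_nonzero; try lra; assert (1 - r*t > 0) by nra; set (cM := (1-r)^M) in *; intro; nra.
    + auto.
    + apply (shift_invlim _ _ _ _ w); auto.
    + simpl. lra.
Qed.

Lemma inv_lt_eps A eps : 0 < A -> 1 < eps * (1 + A) -> 1 / (1 + A) < eps.
Proof.
  intros HA H. apply (Rmult_lt_reg_r (1+A)); [lra|]. unfold Rdiv.
  rewrite Rmult_assoc, Rinv_l, Rmult_1_r; lra.
Qed.

Lemma frac_cmp P u v : 0 < u -> 0 < v -> P * u < v -> P / v < 1 / u.
Proof.
  intros Hu Hv H. replace (P / v) with ((P*u) * / (u*v)) by (field; lra).
  replace (1 / u) with (v * / (u*v)) by (field; lra).
  apply Rmult_lt_compat_r; auto. apply Rinv_0_lt_compat. nra.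
Qed.

Lemma find_cross (y : seqR) r j k : y j <= r -> y (j + k)%nat > r ->
  exists i, (j <= i)%nat /\ y i <= r /\ y (S i) > r.
Proof.
  revert j. induction k; intros j Hj Hk.
  - rewrite Nat.add_0_r in Hk. lra.
  - destruct (Rle_dec (y (S j)) r).
    + destruct (IHk (S j) r0) as [i [Hi1 Hi2]].
      { replace (S j + k)%nat with (j + S k)%nat by lia. auto. }
      exists i. split; [lia|auto].
    + exists j. split; [lia|]. split; [auto|lra].
Qed.

Lemma cross_val r d g a w y i : HH r d g a w -> in_invlim (fmap r d g a) y ->
  y i <= r -> y (S i) > r -> 1 - y (S i) >= (1 - r) * (1 - r).
Proof.
  intros H [Hb Hf] Hi HSi. pose proof H as (Hr & _). specialize (Hb i).
  rewrite <- (Hf i) in Hi. rewrite fmap_gt in Hi by auto. unfold f1 in Hi.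
  assert (y (S i) - r <= r * (1 - r)).
  { apply (Rmult_le_compat_r (1 - r)) in Hi; [|lra]. unfold Rdiv in Hi.
    rewrite Rmult_assoc, Rinv_l, Rmult_1_r in Hi; lra. }
  nra.
Qed.

Lemma lip_h C u v : 0 < C -> u <= 1 -> v <= 1 ->
  Rabs (1 / (1 + (1 - u) / C) - 1 / (1 + (1 - v) / C)) <= Rabs (u - v) / C.
Proof.
  intros HC Hu Hv.
  replace (1 / (1 + (1 - u) / C) - 1 / (1 + (1 - v) / C)) with
    ((C * (u - v)) / ((C + 1 - u) * (C + 1 - v))) by (field; repeat split; lra).
  eapply Rle_trans; [apply (frac_bound _ _ _ C); lra|].
  rewrite Rabs_mult, (Rabs_pos_eq C) by lra. right. field. lra.
Qed.

Lemma cont_h r d g a w : HH r d g a w -> cont_on_invlim (in_invlim (fmap r d g a)) (H_ r d g a).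
Proof.
  intros H x Hx eps Heps. pose proof H as (Hr & _ & _ & _ & Hw & _).
  pose proof (rho1_bounds _ _ _ _ _ H).
  destruct (w_facts _ _ _ _ _ H) as (Ew & Hw0 & Hw1).
  destruct (classic (exists m, x m > rho1 r d g a)) as [[m Hm]|E].
  - pose proof (pow_lt (1 - r) m ltac:(lra)) as Hcm.
    exists m, (Rmin (x m - rho1 r d g a) (eps * (1 - r) ^ m)). split.
    { apply Rmin_case; nra. }
    intros y Hy Hc. specialize (Hc m (le_n m)).
    pose proof (Rmin_l (x m - rho1 r d g a) (eps * (1 - r) ^ m)).
    pose proof (Rmin_r (x m - rho1 r d g a) (eps * (1 - r) ^ m)).
    assert (Hym : y m > rho1 r d g a).
    { pose proof (Rle_abs (x m - y m)). rewrite Rabs_minus_sym in Hc. lra. }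
    rewrite (hfun_val r d g a w y m), (hfun_val r d g a w x m) by auto.
    eapply Rle_lt_trans; [apply lip_h; auto; [apply (proj1 Hy m)|apply (proj1 Hx m)]|].
    apply (Rmult_lt_reg_r ((1 - r) ^ m)); auto. unfold Rdiv.
    rewrite Rmult_assoc, Rinv_l, Rmult_1_r by lra. lra.
  - assert (Exw : forall n, x n = w) by (apply (noex_w r d g a w); auto).
    rewrite (hfun_zero r d g a x) by (intros; rewrite Exw; lra).
    destruct (pow_small (1 - r) (eps * ((1 - r) * (1 - r))) ltac:(lra)) as [N HN].
    { apply Rmult_lt_0_compat; nra. }
    exists N, (r - w). split; [lra|].
    intros y Hy Hc. rewrite Rminus_0_r. pose proof (h_range _ _ _ _ w y H Hy) as Hyr.
    rewrite Rabs_pos_eq by lra.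
    destruct (classic (exists m, y m > rho1 r d g a)) as [[m Hm]|E2].
    + assert (HyN : y N <= r).
      { specialize (Hc N (le_n N)). rewrite Exw in Hc. pose proof (Rle_abs (y N - w)). lra. }
      assert (Hbig : y (N + (m + S N - N))%nat > r).
      { replace (N + (m + S N - N))%nat with (m + S N)%nat by lia.
        apply (A_gt r d g a w); auto. }
      destruct (find_cross y r N _ HyN Hbig) as [i [Hi1 [Hi2 Hi3]]].
      pose proof (cross_val _ _ _ _ _ y i H Hy Hi2 Hi3) as Hcr.
      rewrite (hfun_val r d g a w y (S i)) by (auto; lra).
      pose proof (pow_lt (1 - r) (S i) ltac:(lra)) as HcS.
      pose proof (pow_mono_dec (1 - r) N (S i) ltac:(lra) ltac:(lia)) as Hmono.
      set (cS := (1 - r) ^ (S i)) in *.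
      set (A := (1 - y (S i)) / cS).
      assert (HA : A * cS = 1 - y (S i)) by (unfold A; field; lra).
      assert (HApos : 0 < A) by (unfold A; apply Rdiv_lt_0_compat; nra).
      apply inv_lt_eps; auto.
      assert (A * eps * ((1 - r) * (1 - r)) > (1 - r) * (1 - r)).
      { assert (A * cS < A * (eps * ((1 - r) * (1 - r)))) by (apply Rmult_lt_compat_l; lra). nra. }
      assert (A * eps > 1).
      { assert (0 < (1 - r) * (1 - r)) by nra.
        apply (Rmult_lt_reg_r ((1 - r) * (1 - r))); auto. lra. }
      nra.
    + rewrite hfun_zero; auto. intros m. destruct (Rle_dec (y m) (rho1 r d g a)); auto.
      exfalso. apply E2. exists m. lra.
Qed.

Lemma cont_hinv r d g a w : HH r d g a w -> cont_interval_to_seq (Hi r d g a w).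
Proof.
  intros H t Ht eps N Heps. pose proof H as (Hr & _ & _ & _ & Hw & _).
  pose proof (rho1_bounds _ _ _ _ _ H).
  destruct (w_facts _ _ _ _ _ H) as (Ew & Hw0 & Hw1).
  pose proof (qq_lt1 _ _ _ _ _ H) as Hq.
  destruct (Req_dec t 0) as [->|Ht0].
  - destruct (pow_small (qq r d g a w) (eps / r) Hq) as [J HJ].
    { apply Rdiv_lt_0_compat; lra. }
    set (N' := (N + 2 * J)%nat).
    pose proof (pow_lt (1 - r) N' ltac:(lra)) as HP.
    exists ((1 - r) ^ N' / ((1 - r) ^ N' + (1 - r))). split.
    { apply Rdiv_lt_0_compat; lra. }
    intros s Hs Hsd n Hn. rewrite hinv_zero.
    destruct (Req_dec s 0) as [->|Hs0].
    { rewrite hinv_zero. rewrite Rminus_diag, Rabs_R0. lra. }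
    assert (Hs' : 0 < s <= 1) by lra.
    destruct (hinv_props _ _ _ _ w s H Hs') as [Hinv Hhs].
    set (x := Hi r d g a w s) in *.
    assert (Hxle : x (n + 2 * J)%nat <= r).
    { destruct (Rle_dec (x (n + 2 * J)%nat) r) as [|Hgt]; auto. exfalso.
      set (j := (n + 2 * J)%nat) in *.
      rewrite (hfun_val r d g a w x j) in Hhs by (auto; lra).
      pose proof (pow_lt (1 - r) j ltac:(lra)) as HQ.
      pose proof (pow_mono_dec (1 - r) j N' ltac:(lra) ltac:(unfold j, N'; lia)) as Hmono.
      pose proof (proj1 Hinv j) as Hxj.
      set (A := (1 - x j) / (1 - r) ^ j).
      assert (HA : A * (1 - r) ^ j = 1 - x j) by (unfold A; field; lra).
      assert (HA0 : 0 <= A) by (unfold A; apply Rmult_le_pos; [lra|left; apply Rinv_0_lt_compat; lra]).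
      assert (HPA : (1 - r) ^ N' * (1 + A) < (1 - r) ^ N' + (1 - r)) by nra.
      pose proof (frac_cmp ((1 - r) ^ N') (1 + A) ((1 - r) ^ N' + (1 - r)) ltac:(lra) ltac:(lra) HPA).
      fold A in Hhs. rewrite Hhs in H1.
      rewrite Rminus_0_r in Hsd. rewrite Rabs_pos_eq in Hsd by lra. lra. }
    pose proof (near_w r d g a w x n J H Hinv Hxle).
    apply Rle_lt_trans with (qq r d g a w ^ J * r); auto.
    apply (Rmult_lt_compat_r r) in HJ; [|lra]. unfold Rdiv in HJ.
    rewrite Rmult_assoc, Rinv_l, Rmult_1_r in HJ; lra.
  - assert (Ht' : 0 < t <= 1) by lra.
    destruct (exM _ _ _ _ w t H Ht') as [M HM].
    pose proof (Lof_nonneg t Ht') as HL.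
    pose proof (KK_pos _ _ _ _ _ H) as HK.
    pose proof (pow_lt (KK r d g a) M HK) as HKM.
    pose proof (pow_le_one (1 - r) M ltac:(lra)) as HcM1.
    pose proof (pow_lt (1 - r) M ltac:(lra)) as HcM.
    set (gap := 1 - Lof t * (1 - r) ^ M - rho1 r d g a).
    set (eta := Rmin gap (eps / KK r d g a ^ M)).
    assert (Heta : 0 < eta) by (unfold eta; apply Rmin_case; [unfold gap; lra|apply Rdiv_lt_0_compat; lra]).
    exists (Rmin (t / 2) (eta * t * t / 4)). split.
    { apply Rmin_case; [lra|]. apply Rdiv_lt_0_compat; [|lra]. apply Rmult_lt_0_compat; [nra|lra]. }
    intros s Hs Hsd n Hn.
    pose proof (Rmin_l (t / 2) (eta * t * t / 4)) as Hm1. pose proof (Rmin_r (t / 2) (eta * t * t / 4)) as Hm2.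
    pose proof (Rle_abs (s - t)) as Ha1. pose proof (Rle_abs (-(s - t))) as Ha2. rewrite Rabs_Ropp in Ha2.
    assert (Hs2 : t / 2 <= s) by lra.
    assert (Hs' : 0 < s <= 1) by lra.
    pose proof (Lof_nonneg s Hs') as HLs.
    assert (HdL : Rabs (Lof s - Lof t) < eta).
    { replace (Lof s - Lof t) with ((t - s) / (s * t)) by (unfold Lof; field; lra).
      eapply Rle_lt_trans; [apply (frac_bound _ _ _ (t/2)); lra|].
      rewrite Rabs_minus_sym.
      apply (Rmult_lt_reg_r (t / 2 * (t / 2))); [nra|]. unfold Rdiv at 1.
      rewrite Rmult_assoc, Rinv_l, Rmult_1_r by nra. nra. }
    pose proof (Rmin_l gap (eps / KK r d g a ^ M)) as He1. pose proof (Rmin_r gap (eps / KK r d g a ^ M)) as He2.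
    fold eta in He1, He2.
    pose proof (Rle_abs (Lof s - Lof t)) as Hb1. pose proof (Rle_abs (-(Lof s - Lof t))) as Hb2. rewrite Rabs_Ropp in Hb2.
    assert (HMs : 1 - Lof s * (1 - r) ^ M > rho1 r d g a).
    { unfold gap in He1. assert ((Lof s - Lof t) * (1 - r) ^ M <= Rabs (Lof s - Lof t)) by nra. nra. }
    rewrite (hinv_val _ _ _ _ _ s M n), (hinv_val _ _ _ _ _ t M n) by auto.
    pose proof (pow_mono_dec (1 - r) M (n + M) ltac:(lra) ltac:(lia)).
    pose proof (pow_le (1 - r) (n + M) ltac:(lra)).
    eapply Rle_lt_trans; [apply (itr_lip _ _ _ _ w); auto; split; nra|].
    replace (1 - Lof s * (1 - r) ^ (n + M) - (1 - Lof t * (1 - r) ^ (n + M))) with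
      ((Lof t - Lof s) * (1 - r) ^ (n + M)) by ring.
    rewrite Rabs_mult, (Rabs_pos_eq ((1 - r) ^ (n + M))) by lra. rewrite Rabs_minus_sym.
    assert (Hfin : Rabs (Lof s - Lof t) * (1 - r) ^ (n + M) < eps / KK r d g a ^ M).
    { pose proof (Rabs_pos (Lof s - Lof t)). pose proof (pow_le_one (1-r) (n+M) ltac:(lra)). nra. }
    assert (Eq : KK r d g a ^ M * (eps / KK r d g a ^ M) = eps) by (field; lra).
    apply (Rmult_lt_compat_l (KK r d g a ^ M)) in Hfin; auto. lra.
Qed.

Definition GG r t := (1 - r) * t / (1 - r * t).

Lemma GG_range r t : 0 < r < 1 -> 0 <= t <= 1 -> 0 <= GG r t <= 1.
Proof.
  intros Hr Ht. unfold GG. assert (0 < 1 - r * t) by nra. split.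
  - apply Rmult_le_pos; [nra|]. left. apply Rinv_0_lt_compat. lra.
  - apply (Rmult_le_reg_r (1 - r*t)); auto. unfold Rdiv. rewrite Rmult_assoc, Rinv_l by lra. nra.
Qed.



Lemma GG_diff r s t : 0 < r < 1 -> 0 <= s <= 1 -> 0 <= t <= 1 ->
  GG r s - GG r t = (s - t) * (1 - r) / ((1 - r * s) * (1 - r * t)).
Proof. intros. unfold GG. field. split; nra. Qed.

Lemma GG_mono r s t : 0 < r < 1 -> 0 <= s <= 1 -> 0 <= t <= 1 -> s < t -> GG r s < GG r t.
Proof.
  intros Hr Hs Ht Hst. assert (E := GG_diff r s t Hr Hs Ht).
  assert (0 < 1 - r * t) by nra. assert (0 < 1 - r * s) by nra.
  assert ((s - t) * (1 - r) / ((1 - r * s) * (1 - r * t)) < 0).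
  { unfold Rdiv. assert (0 < / ((1 - r * s) * (1 - r * t))) by (apply Rinv_0_lt_compat; nra).
    assert ((s - t) * (1 - r) < 0) by nra. nra. }
  lra.
Qed.

Lemma GG_surj r u : 0 < r < 1 -> 0 <= u <= 1 -> exists t, 0 <= t <= 1 /\ GG r t = u.
Proof.
  intros Hr Hu. exists (u / (1 - r + r * u)). assert (0 < 1 - r + r * u) by nra. split; [split|].
  - apply Rmult_le_pos; [lra|]. left. apply Rinv_0_lt_compat. lra.
  - apply (Rmult_le_reg_r (1 - r + r*u)); auto. unfold Rdiv. rewrite Rmult_assoc, Rinv_l by lra. nra.
  - unfold GG. field. repeat split; try lra; nra.
Qed.

Lemma GG_cont r : 0 < r < 1 -> cont_interval (GG r).
Proof.
  intros Hr t Ht eps Heps. exists (eps * (1 - r)). split; [nra|].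
  intros s Hs Hst. rewrite GG_diff by auto.
  eapply Rle_lt_trans; [apply (frac_bound _ _ _ (1 - r)); nra|].
  rewrite Rabs_mult, (Rabs_pos_eq (1 - r)) by lra.
  apply (Rmult_lt_reg_r ((1 - r) * (1 - r))); [nra|]. unfold Rdiv.
  rewrite Rmult_assoc, Rinv_l, Rmult_1_r by nra. nra.
Qed.

Lemma GG_fix r t : 0 < r < 1 -> 0 <= t <= 1 -> (GG r t = t <-> t = 0 \/ t = 1).
Proof.
  intros Hr Ht. assert (0 < 1 - r * t) by nra. unfold GG. split.
  - intros E. assert (E2 : (1 - r) * t = t * (1 - r * t)).
    { rewrite <- E at 2. field. lra. }
    assert (r * t * (t - 1) = 0) by nra.
    destruct (Rmult_integral _ _ H0) as [E3|E3]; [|right; lra].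
    destruct (Rmult_integral _ _ E3); [lra|left; auto].
  - intros [-> | ->]; field; lra.
Qed.

Theorem theorem2 (rho delta gamma alpha omega0 : R)
  (Hrho : 0 < rho < 1) (Hdelta : 0 < delta) (Hgamma : gamma > - delta / rho)
  (Halpha : - delta / rho < alpha < 0)
  (Homega : 0 <= omega0 < rho)
  (Hfix : fmap rho delta gamma alpha omega0 = omega0)
  (Hrho1 : rho > rho1 rho delta gamma alpha) :
  let f := fmap rho delta gamma alpha in
  (exists (h : seqR -> R) (hinv : R -> seqR),
     (forall x, in_invlim f x -> 0 <= h x <= 1 /\ hinv (h x) = x) /\
     (forall t, 0 <= t <= 1 -> in_invlim f (hinv t) /\ h (hinv t) = t) /\
     cont_on_invlim (in_invlim f) h /\
     cont_interval_to_seq hinv /\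
     (let g := fun t => h (shift f (hinv t)) in
      (forall t, 0 <= t <= 1 -> 0 <= g t <= 1) /\
      (forall s t, 0 <= s <= 1 -> 0 <= t <= 1 -> s < t -> g s < g t) /\
      (forall u, 0 <= u <= 1 -> exists t, 0 <= t <= 1 /\ g t = u) /\
      cont_interval g /\
      (forall t, 0 <= t <= 1 -> (g t = t <-> t = 0 \/ t = 1)) /\
      h (fun _ => omega0) = 0 /\ h (fun _ => 1) = 1))
  /\
  (forall x, (in_invlim f x /\ of_type rho T_infty x) <-> x = (fun _ => omega0)).
Proof.
  intros f.
  assert (H : HH rho delta gamma alpha omega0) by (unfold HH; tauto).
  pose proof (rho1_bounds _ _ _ _ _ H) as Hr1.
  destruct (w_facts _ _ _ _ _ H) as (Ew & Hw0 & Hw1).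
  split.
  - exists (H_ rho delta gamma alpha), (Hi rho delta gamma alpha omega0).
    assert (Gf : forall t, 0 <= t <= 1 ->
      H_ rho delta gamma alpha (shift f (Hi rho delta gamma alpha omega0 t)) = GG rho t).
    { intros t Ht. unfold f. rewrite (gform _ _ _ _ omega0) by auto. reflexivity. }
    split; [|split; [|split; [|split]]].
    + intros x Hx. split; [apply (h_range _ _ _ _ omega0); auto|apply hinv_h; auto].
    + intros t Ht. destruct (Req_dec t 0) as [->|Ht0].
      * rewrite hinv_zero. split; [apply (w_invlim _ _ _ _ _ H)|].
        apply hfun_zero. intros; lra.
      * apply hinv_props; auto; lra.
    + apply (cont_h _ _ _ _ omega0); auto.
    + apply cont_hinv; auto.
    + intros g. unfold g.
      split; [|split; [|split; [|split; [|split; [|split]]]]].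
      * intros t Ht. rewrite Gf by auto. apply GG_range; auto.
      * intros s t Hs Ht Hst. rewrite !Gf by auto. apply GG_mono; auto.
      * intros u Hu. destruct (GG_surj rho u Hrho Hu) as [t [Ht E]]. exists t. rewrite Gf by auto. auto.
      * intros t Ht eps Heps. destruct (GG_cont rho Hrho t Ht eps Heps) as [d [Hd Hd2]].
        exists d. split; auto. intros s Hs Hst. rewrite !Gf by auto. auto.
      * intros t Ht. rewrite Gf by auto. apply GG_fix; auto.
      * apply hfun_zero. intros; lra.
      * rewrite (hfun_val _ _ _ _ omega0 _ 0); auto.
        -- simpl. field.
        -- split; intros; [lra|]. unfold f. rewrite fmap_gt by lra. unfold f1. field. lra.
        -- lra.
  - intros x. split.
    + intros [Hx Ht]. apply functional_extensionality. intros n.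
      apply (all_le_r _ _ _ _ _ x H Hx). intros [|m].
      * destruct Hx as [Hb Hf]. rewrite <- (Hf 0%nat). destruct (Ht 0%nat) as [T _].
        specialize (T eq_refl). unfold f. rewrite fmap_le by lra.
        destruct (f0_range _ _ _ _ _ (x 1%nat) H T) as [[_ A] _]. lra.
      * destruct (Ht m) as [T _]. specialize (T eq_refl). lra.
    + intros ->. split; [apply (w_invlim _ _ _ _ _ H)|].
      intros n. split; intros E; [lra|discriminate].
Qed.
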